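(* Let $\rho$ be a smooth function on an open interval $I\subset(0,\infty)$ or $I\subset(-\infty,0)$ with $\rho(t)\neq0$ for all $t\in I$, and let $\mu,\sigma$ be nonzero constants. Let $U(r,y),V(r,y)$ be smooth functions on $\mathbb{R}^2$ and define, for $(x,y,t)\in\mathbb{R}^2\times I$, $$u(x,y,t)=\Big(\frac{\rho(t)}{t}\Big)^{1/3}U\Big(\Big(\frac{\rho(t)}{t}\Big)^{1/3}x,\,y\Big),\qquad v(x,y,t)=\Big(\frac{\rho(t)}{t}\Big)^{2/3}V\Big(\Big(\frac{\rho(t)}{t}\Big)^{1/3}x,\,y\Big)-\frac{\rho'(t)}{9\mu}x,$$ with real cube roots. Then $(u,v)$ solves $$\rho(t)u_t+3\mu(uv)_x+\sigma u_{xxx}=0,\qquad u_x=v_y$$ if and only if $(U,V)$ solves $$-\tfrac13\big(U+rU_r\big)+3\mu(UV)_r+\sigma U_{rrr}=0,\qquad U_r-V_y=0.$$ *)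

(* Defs.v *)
From Stdlib Require Import Reals List.
From Coquelicot Require Import Coquelicot.
Open Scope R_scope.

Definition cbrt (x : R) : R :=
  if Rlt_dec 0 x then Rpower x (1/3)
  else if Rlt_dec x 0 then - Rpower (- x) (1/3) else 0.

Definition is_open_interval (I : R -> Prop) : Prop :=
  exists a b : Rbar, Rbar_lt a b /\ forall t, I t <-> (Rbar_lt a t /\ Rbar_lt t b).

Definition smooth_on (I : R -> Prop) (f : R -> R) : Prop :=
  forall (n : nat) (t : R), I t -> ex_derive_n f n t.

(** Iterated partial derivatives of f : R -> R -> R;
    [true] = derivative in the first variable, [false] = in the second. *)
Fixpoint pderivs (l : list bool) (f : R -> R -> R) : R -> R -> R :=
  match l with
  | nil => f
  | b :: l' =>
      let g := pderivs l' f in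
      if b then (fun x y => Derive (fun x' => g x' y) x)
      else (fun x y => Derive (fun y' => g x y') y)
  end.

Definition smooth2 (f : R -> R -> R) : Prop :=
  forall (l : list bool),
    (forall x y, ex_derive (fun x' => pderivs l f x' y) x /\
                 ex_derive (fun y' => pderivs l f x y') y) /\
    (forall p : R * R,
        continuous (fun q : R * R => pderivs l f (fst q) (snd q)) p).

Definition scal (rho : R -> R) (t : R) : R := cbrt (rho t / t).

Definition u_of (rho : R -> R) (U : R -> R -> R) (x y t : R) : R :=
  scal rho t * U (scal rho t * x) y.

Definition v_of (rho : R -> R) (mu : R) (V : R -> R -> R) (x y t : R) : R :=
  (scal rho t) ^ 2 * V (scal rho t * x) y - Derive rho t / (9 * mu) * x.

Definition solves_uv (I : R -> Prop) (rho : R -> R) (mu sigma : R)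
    (u v : R -> R -> R -> R) : Prop :=
  forall x y t, I t ->
    rho t * Derive (fun t' => u x y t') t
      + 3 * mu * Derive (fun x' => u x' y t * v x' y t) x
      + sigma * Derive_n (fun x' => u x' y t) 3 x = 0 /\
    Derive (fun x' => u x' y t) x = Derive (fun y' => v x y' t) y.

Definition solves_UV (mu sigma : R) (U V : R -> R -> R) : Prop :=
  forall r y,
    - (1/3) * (U r y + r * Derive (fun r' => U r' y) r)
      + 3 * mu * Derive (fun r' => U r' y * V r' y) r
      + sigma * Derive_n (fun r' => U r' y) 3 r = 0 /\
    Derive (fun r' => U r' y) r - Derive (fun y' => V r y') y = 0.

(* Main.v *)
Require Import Defs.
From Stdlib Require Import Reals.
From Coquelicot Require Import Coquelicot.
From Stdlib Require Import Lra List.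
Open Scope R_scope.

Lemma cbrt_cube z : cbrt z ^ 3 = z.
Proof.
  assert (K : forall w, 0 < w -> Rpower w (1/3) ^ 3 = w).
  { intros w Hw. rewrite <- Rpower_pow by (unfold Rpower; apply exp_pos).
    rewrite Rpower_mult. replace (1/3 * INR 3) with 1 by (simpl; field).
    apply Rpower_1; auto. }
  unfold cbrt; destruct (Rlt_dec 0 z).
  - apply K; auto.
  - destruct (Rlt_dec z 0).
    + replace ((- Rpower (- z) (1/3)) ^ 3) with (- (Rpower (- z) (1/3) ^ 3)) by ring.
      rewrite K by lra. ring.
    + simpl. lra.
Qed.

Lemma ex_derive_cbrt z : z <> 0 -> ex_derive cbrt z.
Proof.
  intros Hz. destruct (Rlt_dec 0 z) as [Hp|Hn].
  - exists ((1/3) * / z * exp (1/3 * ln z)).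
    apply is_derive_ext_loc with (f := fun w => exp (1/3 * ln w)).
    + apply (filter_imp (fun w => 0 < w)).
      * intros w Hw. unfold cbrt, Rpower. destruct (Rlt_dec 0 w); [reflexivity|lra].
      * apply open_gt; auto.
    + auto_derive; [lra|]. field. lra.
  - assert (Hn' : z < 0) by lra.
    exists (- ((1/3) * / (- z) * (-1) * exp (1/3 * ln (- z)))).
    apply is_derive_ext_loc with (f := fun w => - exp (1/3 * ln (- w))).
    + apply (filter_imp (fun w => w < 0)).
      * intros w Hw. unfold cbrt, Rpower. destruct (Rlt_dec 0 w); [lra|].
        destruct (Rlt_dec w 0); [reflexivity|lra].
      * apply open_lt; auto.
    + auto_derive; [lra|]. field. lra.
Qed.
Lemma scal_facts rho t : t <> 0 -> rho t <> 0 -> ex_derive rho t ->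
  ex_derive (Defs.scal rho) t /\ Defs.scal rho t <> 0 /\ Defs.scal rho t ^ 3 = rho t / t /\
  rho t * Derive (Defs.scal rho) t = Defs.scal rho t * Derive rho t / 3 - Defs.scal rho t ^ 4 / 3.
Proof.
  intros Ht Hr Hd.
  assert (Hq : rho t / t <> 0) by (unfold Rdiv; apply Rmult_integral_contrapositive; split; auto with real).
  assert (Hc : Defs.scal rho t ^ 3 = rho t / t) by apply cbrt_cube.
  assert (Hs : Defs.scal rho t <> 0).
  { intro E. rewrite E in Hc. simpl in Hc. apply Hq. lra. }
  assert (Hq' : ex_derive (fun t' => rho t' / t') t).
  { apply ex_derive_mult; auto. apply (ex_derive_inv (fun y => y)); auto. apply ex_derive_id. }
  assert (He : ex_derive (Defs.scal rho) t).
  { unfold scal. apply (ex_derive_comp cbrt (fun t' => rho t' / t')); auto.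
    apply ex_derive_cbrt; auto. }
  repeat split; auto.
  assert (E1 : Derive (fun t' => Defs.scal rho t' ^ 3) t = Derive (fun t' => rho t' / t') t).
  { apply Derive_ext. intros; apply cbrt_cube. }
  rewrite Derive_pow in E1 by auto.
  assert (E2 : Derive (fun t' => rho t' / t') t = Derive rho t / t - rho t / t ^ 2).
  { unfold Rdiv. rewrite Derive_mult; auto.
    2: apply (ex_derive_inv (fun y => y)); auto; apply ex_derive_id.
    rewrite (Derive_inv (fun y => y)); auto. 2: apply ex_derive_id.
    assert (D1 : forall t, Derive (fun y : R => y) t = 1) by (intro; apply Derive_id). rewrite D1. field; auto. }
  rewrite E2 in E1. change (Init.Nat.pred 3) with 2%nat in E1. replace (INR 3) with 3 in E1 by (simpl; ring).
  set (s := Defs.scal rho t) in *. set (s' := Derive (Defs.scal rho) t) in *.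
  set (r' := Derive rho t) in *.
  assert (Hrho : rho t = s^3 * t) by (rewrite Hc; field; auto).
  rewrite Hrho.
  replace (s ^ 3 * t * s') with (s * t / 3 * (3 * s' * s ^ 2)) by field.
  rewrite E1. rewrite Hrho. field. auto.
Qed.
Lemma D1 t : Derive (fun y : R => y) t = 1.
Proof. apply Derive_id. Qed.

Lemma ex_lin a x : ex_derive (fun x' : R => a * x') x.
Proof. apply ex_derive_scal. apply ex_derive_id. Qed.

Lemma Dlin (f : R -> R) a x : ex_derive f (a * x) -> Derive (fun x' => f (a * x')) x = a * Derive f (a * x).
Proof.
  intros H. rewrite (Derive_comp f (fun x' => a * x')); auto. 2: apply ex_lin.
  rewrite (Derive_scal (fun y => y)). rewrite D1. ring.
Qed.

Lemma exlin (f : R -> R) a x : ex_derive f (a * x) -> ex_derive (fun x' => f (a * x')) x.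
Proof. intros H. apply (ex_derive_comp f (fun x' => a * x')); auto. apply ex_lin. Qed.

Lemma Dn_pd U k : forall x y, Derive_n (fun x' => U x' y) k x = pderivs (repeat true k) U x y.
Proof.
  induction k; intros; simpl; auto.
  apply Derive_ext. intros; apply IHk.
Qed.

Lemma exn U : smooth2 U -> forall y k x, ex_derive_n (fun x' => U x' y) k x.
Proof.
  intros HU y k x. destruct k. exact I. unfold ex_derive_n.
  apply ex_derive_ext with (f := fun x' => pderivs (repeat true k) U x' y).
  - intros; symmetry; apply Dn_pd.
  - exact (proj1 (proj1 (HU (repeat true k)) x y)).
Qed.

Lemma core rho mu sigma U V t x y : t <> 0 -> rho t <> 0 -> ex_derive rho t -> mu <> 0 ->
  smooth2 U -> smooth2 V ->
  let s := Defs.scal rho t in let r := s * x in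
  rho t * Derive (fun t' => u_of rho U x y t') t
      + 3 * mu * Derive (fun x' => u_of rho U x' y t * v_of rho mu V x' y t) x
      + sigma * Derive_n (fun x' => u_of rho U x' y t) 3 x
  = s ^ 4 * (- (1/3) * (U r y + r * Derive (fun r' => U r' y) r)
      + 3 * mu * Derive (fun r' => U r' y * V r' y) r
      + sigma * Derive_n (fun r' => U r' y) 3 r) /\
  Derive (fun x' => u_of rho U x' y t) x = s ^ 2 * Derive (fun r' => U r' y) r /\
  Derive (fun y' => v_of rho mu V x y' t) y = s ^ 2 * Derive (fun y' => V r y') y.
Proof.
  intros Ht Hr Hd Hmu HU HV s r.
  destruct (scal_facts rho t Ht Hr Hd) as [Hs' [Hs0 [Hc Hk]]].
  assert (Ux : forall a b, ex_derive (fun x' => U x' b) a) by (intros; exact (proj1 (proj1 (HU nil) a b))).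
  assert (Vx : forall a b, ex_derive (fun x' => V x' b) a) by (intros; exact (proj1 (proj1 (HV nil) a b))).
  assert (Vy : forall a b, ex_derive (fun y' => V a y') b) by (intros; exact (proj2 (proj1 (HV nil) a b))).
  unfold u_of, v_of.
  assert (Eux : Derive (fun x' => Defs.scal rho t * U (Defs.scal rho t * x') y) x = s * (s * Derive (fun r' => U r' y) r)).
  { rewrite (Derive_scal (fun x' => U (Defs.scal rho t * x') y)). rewrite (Dlin (fun r' => U r' y)); auto. }
  split; [|split].
  - rewrite (Derive_mult (fun x' => Defs.scal rho t * U (Defs.scal rho t * x') y)
       (fun x' => Defs.scal rho t ^ 2 * V (Defs.scal rho t * x') y - Derive rho t / (9 * mu) * x')).
    2: { apply ex_derive_scal. apply (exlin (fun r' => U r' y)); auto. }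
    2: { apply (ex_derive_minus (fun x' => Defs.scal rho t ^ 2 * V (Defs.scal rho t * x') y)).
         apply ex_derive_scal. apply (exlin (fun r' => V r' y)); auto. apply ex_lin. }
    rewrite Eux.
    rewrite (Derive_minus (fun x' => Defs.scal rho t ^ 2 * V (Defs.scal rho t * x') y)).
    2: { apply ex_derive_scal. apply (exlin (fun r' => V r' y)); auto. }
    2: apply ex_lin.
    rewrite (Derive_scal (fun x' => V (Defs.scal rho t * x') y)). rewrite (Dlin (fun r' => V r' y)); auto.
    rewrite (Derive_scal (fun y => y)). rewrite D1.
    rewrite (Derive_n_scal_l (fun x' => U (Defs.scal rho t * x') y)).
    rewrite (Derive_n_comp_scal (fun r' => U r' y)).
    2: { apply filter_forall. intros; apply exn; auto. }
    rewrite (Derive_mult (fun r' => U r' y) (fun r' => V r' y)); auto.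
    rewrite (Derive_mult (Defs.scal rho) (fun t' => U (Defs.scal rho t' * x) y)); auto.
    2: { apply (ex_derive_comp (fun r' => U r' y) (fun t' => Defs.scal rho t' * x)); auto.
         apply ex_derive_mult; auto. apply ex_derive_const. }
    rewrite (Derive_comp (fun r' => U r' y) (fun t' => Defs.scal rho t' * x)); auto.
    2: { apply ex_derive_mult; auto. apply ex_derive_const. }
    rewrite (Derive_scal_l (Defs.scal rho)).
    fold s. fold r.
    set (s' := Derive (Defs.scal rho) t) in *.
    set (Ur := Derive (fun r' => U r' y) r). set (Vr := Derive (fun r' => V r' y) r).
    set (U3 := Derive_n (fun r' => U r' y) 3 r).
    match goal with |- ?a = ?b => apply Rminus_diag_uniq;
      replace (a - b) with ((rho t * s' - (s * Derive rho t / 3 - s ^ 4 / 3)) * (U r y + r * Ur)) end.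
    + rewrite Hk. unfold s. field.
    + unfold r. field. auto.
  - rewrite Eux. ring.
  - rewrite (Derive_minus (fun y' => Defs.scal rho t ^ 2 * V (Defs.scal rho t * x) y')).
    2: { apply ex_derive_scal. auto. }
    2: apply ex_derive_const.
    rewrite Derive_const. rewrite Derive_scal. unfold r, s. change (fun y' => V (Defs.scal rho t * x) y') with (V (Defs.scal rho t * x)). ring.
Qed.

Lemma interval_nonempty Iv : is_open_interval Iv -> exists t, Iv t.
Proof.
  intros [a [b [Hab HI]]].
  destruct a as [a| |]; destruct b as [b| |]; simpl in Hab; try contradiction.
  - exists ((a+b)/2). apply HI. simpl. lra.
  - exists (a+1). apply HI. simpl. lra.
  - exists (b-1). apply HI. simpl. lra.
  - exists 0. apply HI. simpl. auto.
Qed.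

Theorem mainTheorem4 (Iv : R -> Prop) (rho : R -> R) (mu sigma : R)
  (U V : R -> R -> R) :
  is_open_interval Iv ->
  ((forall t, Iv t -> 0 < t) \/ (forall t, Iv t -> t < 0)) ->
  smooth_on Iv rho ->
  (forall t, Iv t -> rho t <> 0) ->
  mu <> 0 -> sigma <> 0 ->
  smooth2 U -> smooth2 V ->
  (solves_uv Iv rho mu sigma (u_of rho U) (v_of rho mu V)
   <-> solves_UV mu sigma U V).
Proof.
  intros HI Hsign Hsm Hr Hmu Hsig HU HV.
  assert (Ht0 : forall t, Iv t -> t <> 0).
  { intros t Ht. destruct Hsign as [H|H]; specialize (H t Ht); lra. }
  assert (Hd : forall t, Iv t -> ex_derive rho t).
  { intros t Ht. exact (Hsm 1%nat t Ht). }
  split.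
  - intros H r y. destruct (interval_nonempty Iv HI) as [t Ht].
    destruct (scal_facts rho t (Ht0 t Ht) (Hr t Ht) (Hd t Ht)) as [_ [Hs0 _]].
    pose proof (core rho mu sigma U V t (r / Defs.scal rho t) y (Ht0 t Ht) (Hr t Ht) (Hd t Ht) Hmu HU HV) as C.
    cbv zeta in C.
    replace (Defs.scal rho t * (r / Defs.scal rho t)) with r in C by (field; auto).
    destruct C as [C1 [C2 C3]].
    destruct (H (r / Defs.scal rho t) y t Ht) as [H1 H2].
    rewrite C1 in H1. rewrite C2, C3 in H2.
    split.
    + apply Rmult_integral in H1. destruct H1 as [H1|H1]; auto.
      exfalso. apply (pow_nonzero _ 4 Hs0). auto.
    + apply Rmult_eq_reg_l in H2. lra. apply pow_nonzero; auto.
  - intros H x y t Ht.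
    pose proof (core rho mu sigma U V t x y (Ht0 t Ht) (Hr t Ht) (Hd t Ht) Hmu HU HV) as C.
    cbv zeta in C. destruct C as [C1 [C2 C3]].
    destruct (H (Defs.scal rho t * x) y) as [H1 H2].
    rewrite C1, H1, C2, C3. split; [ring|].
    apply Rminus_diag_uniq in H2. rewrite H2. reflexivity.
Qed.
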